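(* Let $S=\{\rho_1=0<\rho_2<\cdots\}\neq\mathbb{N}_0$ be an Arf numerical semigroup with conductor $c=\rho_r$. If $j$ is an integer with $\rho_{r-1}+r\le j<c+r$, then $\beta(\rho_j)=r-1$.
   Context: A numerical semigroup is a submonoid $S$ of $(\mathbb{N}_0,+)$ with finite complement, with elements listed increasingly. $S$ is Arf if $\rho_i+\rho_j-\rho_k\in S$ for all positive integers $i\ge j\ge k$. The conductor $c$ is the smallest integer such that all integers $\ge c$ lie in $S$, with $c=\rho_r$ (so $r\ge2$ when $S\neq\mathbb{N}_0$). For $\rho\in S$: $A[\rho]=\{p\in S:\ \rho-p\in S\}$ and $\beta(\rho)=\max\{j\ge1:\ \rho_1,\dots,\rho_j\in A[\rho]\ \text{and}\ 2\rho_j\le\rho\}$. *)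

(* Defs.v *)
From mathcomp Require Import all_boot.
Set Implicit Arguments. Unset Strict Implicit. Unset Printing Implicit Defensive.

Definition numerical_semigroup (S : pred nat) : Prop :=
  S 0 /\ (forall a b, S a -> S b -> S (a + b)) /\
  (exists N, forall n, N <= n -> S n).

(* rho lists the elements of S increasingly, indexed from 1:
   rho 1 < rho 2 < ... and {rho i | i >= 1} = S.  (rho 0 is irrelevant.) *)
Definition increasing_enum (S : pred nat) (rho : nat -> nat) : Prop :=
  (forall i, 0 < i -> S (rho i)) /\
  (forall n, S n -> exists2 i, 0 < i & rho i = n) /\
  (forall i k, 0 < i -> i < k -> rho i < rho k).

Definition Arf (S : pred nat) (rho : nat -> nat) : Prop :=
  forall i j k, 1 <= k -> k <= j -> j <= i -> S (rho i + rho j - rho k).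

Definition is_conductor (S : pred nat) (c : nat) : Prop :=
  (forall n, c <= n -> S n) /\
  (forall c', (forall n, c' <= n -> S n) -> c <= c').

(* A[x] = {p in S : x - p in S} (with p <= x, the subtraction being in Z). *)
Definition in_A (S : pred nat) (x p : nat) : Prop :=
  S p /\ p <= x /\ S (x - p).

Definition beta_cand (S : pred nat) (rho : nat -> nat) (x j : nat) : Prop :=
  1 <= j /\ (forall k, 1 <= k -> k <= j -> in_A S x (rho k)) /\ 2 * rho j <= x.

Definition beta_is (S : pred nat) (rho : nat -> nat) (x b : nat) : Prop :=
  beta_cand S rho x b /\ (forall j, beta_cand S rho x j -> j <= b).

(* Main.v *)
Require Import Defs.
From mathcomp Require Import all_boot.
From mathcomp Require Import zify.

Lemma rho_le {S : pred nat} {rho i k} : increasing_enum S rho -> 0 < i -> i <= k -> rho i <= rho k.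
Proof.
move=> [_ [_ H]] Hi Hik.
case: (ltngtP i k) Hik => // [lt _|-> _]; last by [].
by apply: ltnW; apply: H.
Qed.

Lemma rho_shift {S : pred nat} {rho r} : increasing_enum S rho -> 1 <= r ->
  is_conductor S (rho r) -> forall k, rho (r + k) = rho r + k.
Proof.
move=> He Hr [Hc _]; elim=> [|k IH]; first by rewrite !addn0.
have [_ [Hs Hinc]] := He.
have [i Hi Hri] := Hs _ (Hc (rho r + k.+1) (leq_addr _ _)).
have Hgt : rho (r + k) < rho (r + k.+1) by apply: Hinc; lia.
case: (ltngtP i (r + k.+1)) => Hik.
- have : rho i <= rho (r + k) by apply: (rho_le He); lia.
  lia.
- have : rho (r + k.+1) < rho i by apply: Hinc; lia.
  lia.
- subst i; lia.
Qed.

Theorem mainTheorem9 (S : pred nat) (rho : nat -> nat) (r j : nat) :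
  numerical_semigroup S ->
  increasing_enum S rho ->
  (exists n, ~~ S n) ->
  Arf S rho ->
  is_conductor S (rho r) ->
  1 <= r ->
  rho (r - 1) + r <= j -> j < rho r + r ->
  beta_is S rho (rho j) (r - 1).
Proof.
move=> [S0 _] He [n Hn] _ Hc Hr Hj1 Hj2.
have He' := He; have [HS [Hs Hinc]] := He'.
have rho1 : rho 1 = 0.
  have [i Hi Hri] := Hs 0 S0.
  case: (ltngtP 1 i) => Hi1; last by subst i.
  - have := Hinc 1 i isT Hi1; lia.
  - lia.
have Hr2 : 2 <= r.
  case: (ltngtP r 1) => Hr1; [lia| lia |].
  subst r; move: Hn; rewrite (proj1 Hc n) //; by rewrite rho1.
have Hjr : j = r + (j - r) by lia.
have Hx : rho j = rho r + (j - r) by rewrite {1}Hjr (rho_shift He Hr Hc).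
have Hlt : rho (r - 1) < rho r by apply: Hinc; lia.
split.
  split; first lia.
  split.
    move=> k Hk1 Hk2.
    have Hkle : rho k <= rho (r - 1) by apply: (rho_le He).
    split; first by apply: HS; lia.
    split; first lia.
    apply: (proj1 Hc); lia.
  lia.
move=> j' [Hj'1 [_ Hj'2]].
case: (leqP j' (r - 1)) => // Hj'.
have : rho r <= rho j' by apply: (rho_le He); lia.
lia.
Qed.
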